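(* Let $G$ be a stochastic game with generalized-reachability objective $\mathcal T$ of dimension $n$, let $(L_i,U_i)=\overline{\mathfrak B}^{\,i}(L_0,U_0)$ be the sequence computed by Multi-Objective Bounded Value Iteration, and let $L_\infty(s)=\bigcup_{i\ge0}L_i(s)$. Then for all states $s\in S$ and all directions $\mathbf d\in\mathsf D$, $L_\infty(s)[\mathbf d]=\mathfrak A(s)[\mathbf d]$.
   Context: Stochastic game $G=(S,S_\Box,S_\circ,s_0,A,\mathrm{Av},\delta)$: finite state set $S$ partitioned into Maximizer states $S_\Box$ and Minimizer states $S_\circ$, initial state $s_0$, finite action set $A$, nonempty $\mathrm{Av}(s)$, transition distributions $\delta(s,a)$. Strategies history-dependent randomized; $\mathbb P^{\sigma,\tau}_s$ measure on infinite paths from $s$. Objective $\mathcal T=(T_1,\dots,T_n)$; $\mathfrak A(s)$ = set of $\vec v\in\mathbb R^n_{\ge0}$ such that some Maximizer strategy $\sigma$ gives $\mathbb P^{\sigma,\tau}_s(\Diamond T_i)\ge\vec v_i$ for all Minimizer $\tau$ and all $i$. Geometry: $\mathit{dwc}(X)=\{y\in\mathbb R^n_{\ge0}\mid\exists x\in X:y\le x\}$; $\mathbf 1=\mathit{dwc}(\{\vec1\})$; scaling, Minkowski sum, $\mathrm{conv}$. Directions $[\vec v]=\{\lambda\vec v\mid\lambda>0\}$; $\mathsf D$ = directions of $\vec v\in[0,1]^n\setminus\{\vec0\}$; $X[\mathbf d]=\sup\{\|\vec x\|\mid\vec x\in X,[\vec x]=\mathbf d\}$, $\sup\emptyset=0$.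 Regions are subsets of $\mathsf D$, identified with the points whose direction lies in them. $f(s,a):=\big(\mathit{dwc}(\{\mathbb 1_{\mathcal T}(s)\})+\sum_{s'}\delta(s,a)(s')\cdot f(s')\big)\cap\mathbf 1$ with $\mathbb 1_{\mathcal T}(s)_i=1$ iff $s\in T_i$. Bellman operator: $\mathfrak B(f)(s)=\bigcap_af(s,a)$ for $s\in S_\circ$, $\mathrm{conv}(\bigcup_af(s,a))$ for $s\in S_\Box$. ECs/MECs as usual ($\mathsf{Exits}(T)$ = pairs $(s,a)$, $s\in T$, with a successor outside $T$). Best exit $\mathsf{exit}[f](T)=\big(\mathit{dwc}(\{\sum_{s\in T}\mathbb 1_{\mathcal T}(s)\})+\mathrm{conv}(\bigcup_{(s,a)\in\mathsf{Exits}(T),s\in S_\Box}f(s,a))\big)\cap\mathbf 1$, $\bigcup_\emptyset=\{\vec0\}$. $\mathsf{DEFLATE\_SECs}(G,L,U)$: states in no MEC keep $U(s)$; for each MEC $T$, compute a partition of $\mathsf D$ by common refinement over $s\in T\cap S_\circ$ of the nonempty sets $\{\mathbf d\mid B=\arg\min_{a}L(s,a)[\mathbf d]\}$, $B\subseteq\mathrm{Av}(s)$; for each region $R$ pick $\mathbf d\in R$, restrict Minimizer states in $T$ to actions minimizing $L(s,a)[\mathbf d]$, compute the MECs $\mathcal S$ of $T$ under the restriction; for $s\in T$, the new bound is the union over regions $R$ of $U(s)\cap\mathsf{exit}[U](C)\cap R$ if $s\in C\in\mathcal S$, else $U(s)\cap R$, together with $\vec0$. Multi-Objective Bounded Value Iteration: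 $L_0(s)=\{\vec0\}$, $U_0(s)=\mathit{dwc}(\{\vec1\})$; $\overline{\mathfrak B}(L,U)=(\mathfrak B(L),\mathsf{DEFLATE\_SECs}(G,\mathfrak B(L),\mathfrak B(U)))$. *)

(* Defs.v *)
From HB Require Import structures.
From mathcomp Require Import all_boot all_order all_algebra.
From mathcomp Require Import boolp classical_sets reals.
Set Implicit Arguments. Unset Strict Implicit. Unset Printing Implicit Defensive.
Import Order.TTheory GRing.Theory Num.Theory.
Local Open Scope classical_set_scope.
Local Open Scope ring_scope.

Section Games.
Variable R : realType.

(* S : states, A : actions; [is_max s] = true iff s is a Maximizer state
   (S_box), false iff Minimizer state (S_circ). *)
Record game (S A : finType) := Game {
  is_max : S -> bool;
  s_init : S;
  Av : S -> {set A};
  delta : S -> A -> S -> R }.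

Definition wf_game (S A : finType) (G : game S A) : Prop :=
  (forall s, Av G s != finset.set0) /\
  (forall s a, a \in Av G s ->
     (forall s', 0 <= delta G s a s') /\ \sum_(s' : S) delta G s a s' = 1).

(* finite histories s0 a0 s1 a1 ... s_k: list of (state,action) pairs
   already played, plus the current state. *)
Definition strategy (S A : finType) := seq (S * A) -> S -> A -> R.

Definition valid_strategy (S A : finType) (G : game S A) (owner : bool)
  (st : strategy S A) : Prop :=
  forall (h : seq (S * A)) (s : S), is_max G s = owner ->
    (forall a, 0 <= st h s a) /\ (forall a, a \notin Av G s -> st h s a = 0)
    /\ \sum_(a : A) st h s a = 1.

Fixpoint reach_within (S A : finType) (G : game S A) (sg tau : strategy S A)
  (T : {set S}) (k : nat) (h : seq (S * A)) (s : S) : R :=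
  if s \in T then 1 else
  match k with
  | 0 => 0
  | k'.+1 =>
      \sum_(a : A) (if is_max G s then sg h s a else tau h s a) *
        \sum_(s' : S) delta G s a s' * reach_within G sg tau T k' (rcons h (s, a)) s'
  end.

(* P^{sigma,tau}_s(<> T) = lim_k P(reach T within k steps) = sup_k ... *)
Definition reach_prob (S A : finType) (G : game S A) (sg tau : strategy S A)
  (T : {set S}) (s : S) : R :=
  sup [set reach_within G sg tau T k [::] s | k in [set: nat]].

Definition vec (n : nat) := 'I_n -> R.
Definition vle n (x y : vec n) := forall i, x i <= y i.
Definition nonneg n (x : vec n) := forall i, 0 <= x i.
Definition vconst n (c : R) : vec n := fun _ => c.

Definition dwc n (X : set (vec n)) : set (vec n) :=
  [set y | nonneg y /\ exists2 x, X x & vle y x].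
Definition unit_box n : set (vec n) := dwc [set @vconst n 1].
Definition vscale n (c : R) (X : set (vec n)) : set (vec n) :=
  [set (fun i => c * x i) | x in X].
Definition msum n (X Y : set (vec n)) : set (vec n) :=
  [set z | exists x y, [/\ X x, Y y & z = (fun i => x i + y i)]].
Definition bigmsum n (I : finType) (F : I -> set (vec n)) : set (vec n) :=
  [set z | exists g : I -> vec n, (forall j, F j (g j)) /\
                                  z = (fun i => \sum_(j : I) g j i)].
Definition conv n (X : set (vec n)) : set (vec n) :=
  [set z | exists (k : nat) (w : 'I_k -> R) (p : 'I_k -> vec n),
     [/\ (forall j, 0 <= w j), \sum_(j < k) w j = 1, (forall j, X (p j))
       & z = (fun i => \sum_(j < k) w j * p j i)]].

Definition vnorm n (x : vec n) : R := Num.sqrt (\sum_(i < n) x i ^+ 2).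
(* the direction [d] of a nonzero d is represented by d itself;
   X[d] = sup { ||x|| | x in X, [x] = [d] }, sup of the empty set = 0 *)
Definition same_dir n (x d : vec n) := exists2 l : R, 0 < l & x = (fun i => l * d i).
Definition dirval n (X : set (vec n)) (d : vec n) : R :=
  sup [set vnorm x | x in [set x | X x /\ same_dir x d]].
Definition in_D n (d : vec n) := (forall i, 0 <= d i <= 1) /\ exists i, d i != 0.

Definition indic (S : finType) n (T : 'I_n -> {set S}) (s : S) : vec n :=
  fun i => if s \in T i then 1 else 0.

Definition achievable (S A : finType) (G : game S A) n (T : 'I_n -> {set S})
  (s : S) : set (vec n) :=
  [set v | nonneg v /\ exists sg, valid_strategy G true sg /\
     forall tau, valid_strategy G false tau ->
       forall i, v i <= reach_prob G sg tau (T i) s].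

Definition fsa (S A : finType) (G : game S A) n (T : 'I_n -> {set S})
  (f : S -> set (vec n)) (s : S) (a : A) : set (vec n) :=
  msum (dwc [set indic T s]) (bigmsum (fun s' => vscale (delta G s a s') (f s')))
  `&` @unit_box n.

Definition bellman (S A : finType) (G : game S A) n (T : 'I_n -> {set S})
  (f : S -> set (vec n)) (s : S) : set (vec n) :=
  if is_max G s then conv (\bigcup_(a in [set a | a \in Av G s]) fsa G T f s a)
  else \bigcap_(a in [set a | a \in Av G s]) fsa G T f s a.

(* L_0(s) = {0}; L_{i+1} = B(L_i) (the first component of
   \overline{B}(L_i,U_i) is B(L_i), independently of U_i) *)
Fixpoint Lseq (S A : finType) (G : game S A) n (T : 'I_n -> {set S}) (i : nat)
  : S -> set (vec n) :=
  match i with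
  | 0 => fun _ => [set @vconst n 0]
  | i'.+1 => bellman G T (Lseq G T i')
  end.

Definition Linf (S A : finType) (G : game S A) n (T : 'I_n -> {set S}) (s : S)
  : set (vec n) := \bigcup_(i in [set: nat]) Lseq G T i s.

End Games.

(* Main.v *)
Require Import Defs.
From HB Require Import structures.
From mathcomp Require Import all_boot all_order all_algebra.
From mathcomp Require Import boolp classical_sets reals.
From mathcomp Require Import lra.
Import Order.TTheory GRing.Theory Num.Theory.
Local Open Scope classical_set_scope.
Local Open Scope ring_scope.
Set Implicit Arguments. Unset Strict Implicit. Unset Printing Implicit Defensive.

Section Geo.
Variable R : realType.
Variable n : nat.
Notation vecn := (vec R n).

Definition SC (X : set vecn) := forall x c, X x -> (forall i, 0 <= c i <= 1) ->
  X (fun i => c i * x i).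
Definition BC (X : set vecn) := forall x y l, X x -> X y -> 0 <= l <= 1 ->
  X (fun i => l * x i + (1 - l) * y i).
Definition InBox (X : set vecn) := forall x, X x -> forall i, 0 <= x i <= 1.
Definition Has0 (X : set vecn) := X (vconst 0).

Lemma conv_SC (X : set vecn) : SC X -> SC (conv X).
Proof.
move=> HX z c [k [w [p [w0 w1 Xp ->]]]] c01.
exists k, w, (fun j i => c i * p j i); split => //.
  by move=> j; apply: HX.
apply: funext => i /=; rewrite mulr_sumr; apply: eq_bigr => j _.
by rewrite mulrCA.
Qed.

Lemma conv_box (X : set vecn) : InBox X -> InBox (conv X).
Proof.
move=> HX z [k [w [p [w0 w1 Xp ->]]]] i; apply/andP; split.
  by apply: sumr_ge0 => j _; apply: mulr_ge0 => //; case/andP: (HX _ (Xp j) i).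
rewrite -w1; apply: ler_sum => j _; rewrite ler_piMr //.
by case/andP: (HX _ (Xp j) i).
Qed.

Lemma conv_has0 (X : set vecn) : Has0 X -> Has0 (conv X).
Proof.
move=> H0; exists 1%N, (fun _ => 1), (fun _ => vconst 0); split => //.
- by rewrite big_ord1.
- apply: funext => i; rewrite big_ord1 /vconst mulr0 //.
Qed.

Lemma conv_BC (X : set vecn) : BC (conv X).
Proof.
move=> x y l [k [w [p [w0 w1 Xp ->]]]] [k' [w' [p' [w0' w1' Xp' ->]]]] /andP[l0 l1].
exists (k + k')%N.
exists (fun j => match split j with inl a => l * w a | inr b => (1 - l) * w' b end).
exists (fun j => match split j with inl a => p a | inr b => p' b end).
have sl : forall a, split (lshift k' a) = inl a := fun a => unsplitK (inl a).
have sr : forall b, split (rshift k b) = inr b := fun b => unsplitK (inr b).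
split.
- move=> j; case: split => [a|b]; apply: mulr_ge0 => //; by rewrite subr_ge0.
- rewrite big_split_ord /=.
  rewrite (eq_bigr (fun a => l * w a)); last by move=> a _ /=; rewrite sl.
  rewrite [X in _ + X](eq_bigr (fun b => (1 - l) * w' b)); last by move=> b _ /=; rewrite sr.
  by rewrite -!mulr_sumr w1 w1' !mulr1 addrC subrK.
- by move=> j; case: split.
- apply: funext => i; rewrite [RHS]big_split_ord /=.
  rewrite [in RHS](eq_bigr (fun a => l * w a * p a i)); last by move=> a _ /=; rewrite sl.
  rewrite [in RHS](eq_bigr (fun b => (1 - l) * w' b * p' b i)); last by move=> b _ /=; rewrite sr.
  by rewrite !mulr_sumr; congr (_ + _); apply: eq_bigr => j _; rewrite mulrA.
Qed.

Lemma BC_CC (X : set vecn) : BC X -> forall k (w : 'I_k -> R) (p : 'I_k -> vecn),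
  (forall j, 0 <= w j) -> \sum_(j < k) w j = 1 -> (forall j, X (p j)) ->
  X (fun i => \sum_(j < k) w j * p j i).
Proof.
move=> HB; elim=> [|k IH] w p w0 w1 Xp.
  by move: w1; rewrite big_ord0 => /eqP; rewrite eq_sym oner_eq0.
move: w1; rewrite big_ord_recl => w1.
have [w01e|w1ne] := eqVneq (w ord0) 1.
  rewrite w01e in w1.
  have r0 : forall j : 'I_k, w (lift ord0 j) = 0.
    move: w1; rewrite -{2}(addr0 1) => /addrI /eqP; rewrite psumr_eq0 => [/allP H j|j _ //].
    by apply/eqP; apply: (H j); rewrite mem_index_enum.
  suff -> : (fun i => \sum_(j < k.+1) w j * p j i) = p ord0 by [].
  apply: funext => i; rewrite big_ord_recl big1 ?addr0 ?w01e ?mul1r // => j _.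
  by rewrite r0 mul0r.
set t := 1 - w ord0.
have tpos : 0 < t.
  rewrite lt_neqAle subr_ge0 eq_sym subr_eq0 eq_sym w1ne /= -w1 lerDl.
  by apply: sumr_ge0.
have k0 : \sum_(j < k) w (lift ord0 j) = t by rewrite /t -w1 addrC addKr.
have Xq := IH (fun j => w (lift ord0 j) / t) (fun j => p (lift ord0 j))
  (fun j => divr_ge0 (w0 _) (ltW tpos)).
have /Xq {}Xq : \sum_(j < k) w (lift ord0 j) / t = 1.
  by rewrite -mulr_suml k0 divff // gt_eqF.
have /Xq {}Xq : forall j, X (p (lift ord0 j)) by move=> j; apply: Xp.
  have := HB _ _ (w ord0) (Xp ord0) Xq.
  have w01 : 0 <= w ord0 <= 1.
    by rewrite w0 /= -subr_ge0 ltW.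
  move=> /(_ w01).
  congr X; apply: funext => i; rewrite big_ord_recl; congr (_ + _).
  rewrite -/t mulr_sumr; apply: eq_bigr => j _.
  by rewrite mulrA mulrCA divff ?gt_eqF // mulr1.
Qed.

End Geo.
Section Game.
Variable R : realType.
Variables S A : finType.
Variable G : game R S A.
Variable n : nat.
Variable T : 'I_n -> {set S}.
Hypothesis wf : wf_game G.
Notation vecn := (vec R n).

Lemma fsaP (f : S -> set vecn) s a z :
  fsa G T f s a z <->
  (exists p g, [/\ (forall i, 0 <= p i <= indic R T s i), (forall s', f s' (g s'))
     & z = (fun i => p i + \sum_(s' : S) delta G s a s' * g s' i)])
  /\ (forall i, 0 <= z i <= 1).
Proof.
split.
- case=> [[x [y [[x0 [x' -> xle]] [gg [Hgg ->] ->]]]] [z0 [_ -> zle]]].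
  have Hgg' : forall j, exists xj, f j xj /\ (fun i => delta G s a j * xj i) = gg j.
    by move=> j; case: (Hgg j) => xj fx e; exists xj.
  have [g Hg] := choice Hgg'.
  split; last by move=> i; rewrite z0 zle.
  exists x, g; split.
  + by move=> i; rewrite x0 xle.
  + by move=> j; case: (Hg j).
  + apply: funext => i; congr (_ + _); apply: eq_bigr => j _.
    by case: (Hg j) => _ <-.
- case=> [[p [g [p01 Hg ->]]] z01]; split.
  + exists p, (fun i => \sum_(s' : S) delta G s a s' * g s' i); split => //.
    * split; first by move=> i; case/andP: (p01 i).
      by exists (indic R T s) => // i; case/andP: (p01 i).
    * exists (fun s' i => delta G s a s' * g s' i); split => //.
      by move=> j; exists (g j).
  + split; first by move=> i; case/andP: (z01 i).
    by exists (vconst 1) => // i; case/andP: (z01 i).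
Qed.


Lemma Av_ne s : exists a, a \in Av G s.
Proof. by apply/set0Pn; case: wf => H _; apply: H. Qed.

Lemma delta_ge0 s a s' : a \in Av G s -> 0 <= delta G s a s'.
Proof. by case: wf => _ H /H [->]. Qed.

Lemma delta_sum1 s a : a \in Av G s -> \sum_(s' : S) delta G s a s' = 1.
Proof. by case: wf => _ H /H []. Qed.

Section FsaProps.
Variable f : S -> set vecn.

Lemma fsa_box s a : InBox (fsa G T f s a).
Proof. by move=> z /fsaP [_ H]. Qed.

Lemma fsa_SC s a : (forall s', SC (f s')) -> SC (fsa G T f s a).
Proof.
move=> Hf z c /fsaP [[p [g [p01 Hg ->]]] z01] c01; apply/fsaP; split.
  exists (fun i => c i * p i), (fun s' i => c i * g s' i); split.
  - move=> i; case/andP: (p01 i) => p0 p1; case/andP: (c01 i) => c0 c1.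
    by rewrite mulr_ge0 //= (le_trans _ p1) // ler_piMl.
  - by move=> s'; apply: Hf.
  - apply: funext => i; rewrite mulrDr mulr_sumr; congr (_ + _).
    by apply: eq_bigr => j _; rewrite mulrCA.
move=> i; case/andP: (z01 i) => z0 z1; case/andP: (c01 i) => c0 c1.
by rewrite mulr_ge0 //= (le_trans _ z1) // ler_piMl.
Qed.

Lemma fsa_BC s a : (forall s', BC (f s')) -> BC (fsa G T f s a).
Proof.
move=> Hf x y l /fsaP [[p [g [p01 Hg ->]]] x01] /fsaP [[p' [g' [p01' Hg' ->]]] y01] /andP[l0 l1].
apply/fsaP; split.
  exists (fun i => l * p i + (1 - l) * p' i), (fun s' i => l * g s' i + (1 - l) * g' s' i).
  split.
  - move=> i; case/andP: (p01 i) => p0 p1; case/andP: (p01' i) => p0' p1'.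
    have l0' : 0 <= 1 - l by rewrite subr_ge0.
    rewrite addr_ge0 ?mulr_ge0 //=.
    apply: (le_trans (y := l * indic R T s i + (1 - l) * indic R T s i)).
      by rewrite lerD // ler_wpM2l.
    by rewrite -mulrDl addrC subrK mul1r.
  - by move=> s'; apply: Hf => //; rewrite l0 l1.
  - apply: funext => i; rewrite !mulrDr !mulr_sumr.
    rewrite -!addrA; congr (_ + _); rewrite addrCA; congr (_ + _).
    rewrite -big_split /=; apply: eq_bigr => j _.
    by rewrite mulrDr mulrCA [(1 - l) * _]mulrCA.
move=> i; case/andP: (x01 i) => x0 x1; case/andP: (y01 i) => y0 y1.
have l0' : 0 <= 1 - l by rewrite subr_ge0.
rewrite addr_ge0 ?mulr_ge0 //=.
apply: (le_trans (y := l * 1 + (1 - l) * 1)).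
  by rewrite lerD // ler_wpM2l.
by rewrite !mulr1 addrC subrK.
Qed.

Lemma fsa_has0 s a : (forall s', Has0 (f s')) -> Has0 (fsa G T f s a).
Proof.
move=> Hf; apply/fsaP; split.
  exists (vconst 0), (fun _ => vconst 0); split => //.
  - move=> i; rewrite /vconst lexx /indic /=; by case: ifP.
  - apply: funext => i; rewrite /vconst add0r big1 // => j _; by rewrite mulr0.
by move=> i; rewrite /vconst lexx ler01.
Qed.

End FsaProps.

Definition Good (X : set vecn) := [/\ SC X, BC X, InBox X & Has0 X].

Lemma bellman_good f s : (forall s', Good (f s')) -> Good (bellman G T f s).
Proof.
move=> Hf.
have fSC : forall s', SC (f s') by move=> s'; case: (Hf s').
have fBC : forall s', BC (f s') by move=> s'; case: (Hf s').
have f0 : forall s', Has0 (f s') by move=> s'; case: (Hf s').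
have [a0 a0A] := Av_ne s.
rewrite /bellman; case: ifP => _; split.
- apply: conv_SC => z c [a aA Hz] c01; exists a => //; exact: fsa_SC.
- exact: conv_BC.
- apply: conv_box => z [a aA Hz]; exact: fsa_box Hz.
- apply: conv_has0; exists a0 => //; exact: fsa_has0.
- move=> z c Hz c01 a aA; apply: fsa_SC => //; exact: Hz.
- move=> x y l Hx Hy l01 a aA; apply: fsa_BC => //; [exact: Hx|exact: Hy].
- move=> z Hz; apply: (fsa_box (Hz a0 a0A)).
- move=> a aA; exact: fsa_has0.
Qed.

Lemma Lseq_good k s : Good (Lseq G T k s).
Proof.
elim: k s => [|k IH] s /=; last by apply: bellman_good.
split.
- move=> x c -> _; apply: funext => i; by rewrite /vconst mulr0.
- move=> x y l -> -> _; apply: funext => i; by rewrite /vconst !mulr0 addr0.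
- by move=> x -> i; rewrite /vconst lexx ler01.
- by [].
Qed.

Definition distr_on s (pi : A -> R) :=
  [/\ forall a, 0 <= pi a, forall a, a \notin Av G s -> pi a = 0 & \sum_a pi a = 1].

Lemma valid_pi sg tau h s : valid_strategy G true sg -> valid_strategy G false tau ->
  distr_on s (fun a => if is_max G s then sg h s a else tau h s a).
Proof.
move=> Hs Ht; case E: (is_max G s).
- by case: (Hs h s E) => [H1 [H2 H3]]; split.
- by case: (Ht h s E) => [H1 [H2 H3]]; split.
Qed.

Lemma wsum_le s (pi : A -> R) (X Y : A -> R) : (forall a, 0 <= pi a) ->
  (forall a, a \notin Av G s -> pi a = 0) -> (forall a, a \in Av G s -> X a <= Y a) ->
  \sum_a pi a * X a <= \sum_a pi a * Y a.
Proof.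
move=> p0 pA XY; apply: ler_sum => a _; case: (boolP (a \in Av G s)) => aA.
  by rewrite ler_wpM2l // XY.
by rewrite pA // !mul0r.
Qed.

Lemma dsum_le s a (X Y : S -> R) : a \in Av G s -> (forall s', X s' <= Y s') ->
  \sum_s' delta G s a s' * X s' <= \sum_s' delta G s a s' * Y s'.
Proof. by move=> aA XY; apply: ler_sum => s' _; rewrite ler_wpM2l ?delta_ge0. Qed.

Lemma wsum_const s (pi : A -> R) c : distr_on s pi -> \sum_a pi a * c = c.
Proof. by case=> _ _ H; rewrite -mulr_suml H mul1r. Qed.

Lemma dsum_const s a c : a \in Av G s -> \sum_s' delta G s a s' * c = c.
Proof. by move=> aA; rewrite -mulr_suml delta_sum1 // mul1r. Qed.

Notation RW := (reach_within G).

Lemma RW_bounds sg tau Ti k h s : valid_strategy G true sg -> valid_strategy G false tau ->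
  0 <= RW sg tau Ti k h s <= 1.
Proof.
move=> Hs Ht; elim: k h s => [|k IH] h s /=; case: ifP => // _; rewrite ?lexx ?ler01 //.
have Hp := valid_pi h s Hs Ht; case: (Hp) => p0 pA p1.
apply/andP; split.
  rewrite -[X in X <= _](wsum_const 0 Hp); apply: (wsum_le p0 pA) => a aA.
  rewrite -[X in X <= _](dsum_const 0 aA); apply: dsum_le => // s'; by case/andP: (IH (rcons h (s, a)) s').
rewrite -[X in _ <= X](wsum_const 1 Hp); apply: (wsum_le p0 pA) => a aA.
rewrite -[X in _ <= X](dsum_const 1 aA); apply: dsum_le => // s'; by case/andP: (IH (rcons h (s, a)) s').
Qed.

Definition ext (h : seq (S * A)) (s : S) (h' : seq (S * A)) (t : S) : Prop :=
  (h' = h /\ t = s) \/ exists b e, h' = h ++ (s, b) :: e.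

Lemma RW_local sg1 sg2 tau Ti k h s :
  (forall h' t, ext h s h' t -> sg1 h' t =1 sg2 h' t) ->
  RW sg1 tau Ti k h s = RW sg2 tau Ti k h s.
Proof.
elim: k h s => [|k IH] h s He //=; case: ifP => // _.
apply: eq_bigr => a _; congr (_ * _).
  by case: ifP => // _; apply: He; left.
apply: eq_bigr => s' _; congr (_ * _); apply: IH => h' t [[-> ->]|[b [e ->]]].
  by apply: He; right; exists a, [::]; rewrite cats1.
by apply: He; right; exists a, ((s', b) :: e); rewrite cat_rcons.
Qed.

Definition pmass (a0 : A) : A -> R := fun a => if a == a0 then 1 else 0.

Lemma sum_pmass a0 (F : A -> R) : \sum_a pmass a0 a * F a = F a0.
Proof.
rewrite (bigD1 a0) //= big1 ?addr0 /pmass ?eqxx ?mul1r // => a /negPf ->.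
by rewrite mul0r.
Qed.

Lemma distr_pmass s a0 : a0 \in Av G s -> distr_on s (pmass a0).
Proof.
move=> a0A; split.
- by move=> a; rewrite /pmass; case: ifP; rewrite ?ler01 ?lexx.
- by move=> a aA; rewrite /pmass; case: eqP => // E; move: aA; rewrite E a0A.
- by rewrite -(sum_pmass a0 (fun _ => 1)); apply: eq_bigr => a _; rewrite mulr1.
Qed.

Definition adef (s : S) : A := xchoose (Av_ne s).
Lemma adefP s : adef s \in Av G s.
Proof. exact: xchooseP. Qed.

Definition sdef : strategy R S A := fun h t => pmass (adef t).

Lemma sdef_valid b : valid_strategy G b sdef.
Proof.
move=> h t _; case: (distr_pmass (adefP t)) => H1 H2 H3; split => //.
Qed.

Definition head_state (e : seq (S * A)) (t : S) : S :=
  if e is (s', _) :: _ then s' else t.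

Definition comb (h0 : seq (S * A)) (s0 : S) (mu : A -> R) (fam : A -> S -> strategy R S A)
  : strategy R S A := fun h t =>
  match drop (size h0) h with
  | [::] => if (h == h0) && (t == s0) then mu else sdef h t
  | (s1, b) :: e => if (take (size h0) h == h0) && (s1 == s0)
                    then fam b (head_state e t) h t else sdef h t
  end.

Lemma comb_root h0 s0 mu fam : comb h0 s0 mu fam h0 s0 = mu.
Proof. by rewrite /comb drop_size !eqxx. Qed.

Lemma comb_ext h0 s0 mu fam b s' h' t : ext (rcons h0 (s0, b)) s' h' t ->
  comb h0 s0 mu fam h' t = fam b s' h' t.
Proof.
rewrite /comb => [[[-> ->]|[b' [e ->]]]].
  by rewrite -cats1 drop_size_cat // take_size_cat // !eqxx.
by rewrite cat_rcons drop_size_cat // take_size_cat // !eqxx.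
Qed.

Lemma comb_valid h0 s0 mu fam : (is_max G s0 -> distr_on s0 mu) ->
  (forall b s', valid_strategy G true (fam b s')) -> valid_strategy G true (comb h0 s0 mu fam).
Proof.
move=> Hmu Hfam h t Ht; rewrite /comb.
case: (drop _ _) => [|[s1 b] e].
  case: ifP => [/andP[_ /eqP E]|_]; last exact: sdef_valid.
  by subst t; case: (Hmu Ht).
case: ifP => _; [exact: Hfam | exact: sdef_valid].
Qed.
Lemma sum_fiber m (cf : 'I_m -> A) (F : 'I_m -> A -> R) :
  \sum_a \sum_(j < m) (if cf j == a then F j a else 0) = \sum_(j < m) F j (cf j).
Proof.
rewrite exchange_big; apply: eq_bigr => j _.
rewrite (bigD1 (cf j)) //= eqxx big1 ?addr0 // => a /negPf.
by rewrite eq_sym => ->.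
Qed.

Lemma step_decomp k s x : Lseq G T k.+1 s x -> exists (mu : A -> R) (gf : A -> S -> vecn),
  [/\ (is_max G s -> distr_on s mu), (forall a s', Lseq G T k s' (gf a s')) &
   forall pi, distr_on s pi -> (is_max G s -> pi = mu) -> forall i, s \notin T i ->
     x i <= \sum_a pi a * \sum_s' delta G s a s' * gf a s' i].
Proof.
set f := Lseq G T k.
have fG : forall s', Good (f s') by move=> s'; apply: Lseq_good.
rewrite /= /bellman; case: ifP => Hmax Hx.
-
  case: Hx => [m [w [p [w0 w1 Xp ->]]]].
  have Hc : forall j, exists c, c \in Av G s /\ fsa G T f s c (p j).
    by move=> j; case: (Xp j) => c cA Hc; exists c.
  have [cf Hcf] := choice Hc.
  have Hg : forall j, exists g : S -> vecn, (forall s', f s' (g s')) /\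
      forall i, s \notin T i -> p j i <= \sum_s' delta G s (cf j) s' * g s' i.
    move=> j; case: (Hcf j) => _ /fsaP [[q [g [q01 Hg ->]]] _]; exists g; split => // i sT.
    case/andP: (q01 i) => _; rewrite /indic (negPf sT) => q0.
    by rewrite -[X in _ <= X]add0r lerD2r.
  have [gj Hgj] := choice Hg.
  pose mu a := \sum_(j < m | cf j == a) w j.
  pose w' a j := if cf j == a then w j / mu a else 0.
  pose p' a s' j := if cf j == a then gj j s' else vconst 0.
  exists mu, (fun a s' => if mu a == 0 then vconst 0 else
                 (fun i => \sum_(j < m) w' a j * p' a s' j i)).
  have mu0 : forall a, 0 <= mu a by move=> a; apply: sumr_ge0.
  have key : forall a s' i, mu a * (if mu a == 0 then vconst 0 else
                 (fun i => \sum_(j < m) w' a j * p' a s' j i)) i =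
                 \sum_(j < m) (if cf j == a then w j * gj j s' i else 0).
    move=> a s' i; case: eqP => [E|/eqP NE].
      rewrite E mul0r; symmetry; apply: big1 => j _; case: eqP => // Ej.
      move: E; rewrite /mu => /eqP; rewrite psumr_eq0 // => /allP /(_ j).
      by rewrite mem_index_enum Ej eqxx => /(_ isT) /implyP /(_ isT) /eqP ->; rewrite mul0r.
    rewrite mulr_sumr; apply: eq_bigr => j _; rewrite /w' /p'; case: eqP => _.
      by rewrite mulrA mulrCA divff // mulr1.
    by rewrite mul0r mulr0.
  split.
  + move=> _; split => //.
    * move=> a aA; apply: big1 => j /eqP E; move: aA; rewrite -E.
      by case: (Hcf j) => ->.
    * have E := sum_fiber cf (fun j _ => w j); rewrite /= in E.
      rewrite -w1 -E; apply: eq_bigr => a _.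
      by rewrite /mu big_mkcond.
  + move=> a s'; case: eqP => [_|/eqP NE]; first by case: (fG s').
    case: (fG s') => _ HB _ H0; apply: BC_CC => //.
    * by move=> j; rewrite /w'; case: eqP => _ //; apply: divr_ge0.
    * rewrite /w' -big_mkcond /= -mulr_suml divff //.
    * by move=> j; rewrite /p'; case: eqP => _ //; case: (Hgj j).
  + move=> pi _ /(_ isT) -> i sT.
    have -> : \sum_a mu a * \sum_s' delta G s a s' *
         (if mu a == 0 then vconst 0 else (fun i => \sum_(j < m) w' a j * p' a s' j i)) i
        = \sum_a \sum_(j < m) (if cf j == a then
             w j * \sum_s' delta G s a s' * gj j s' i else 0).
      apply: eq_bigr => a _; rewrite mulr_sumr.
      under eq_bigr do rewrite mulrCA key mulr_sumr.
      rewrite exchange_big; apply: eq_bigr => j _; case: eqP => [<-|_].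
        by rewrite mulr_sumr; apply: eq_bigr => s'' _; rewrite mulrCA.
      by apply: big1 => s'' _; rewrite mulr0.
    have E := sum_fiber cf (fun j a => w j * \sum_s' delta G s a s' * gj j s' i).
    rewrite /= in E; rewrite E.
    apply: ler_sum => j _; apply: ler_wpM2l => //.
    by case: (Hgj j) => _ /(_ i sT).
-
  have Hg : forall a, exists g : S -> vecn, (forall s', f s' (g s')) /\
      (a \in Av G s -> forall i, s \notin T i -> x i <= \sum_s' delta G s a s' * g s' i).
    move=> a; case: (boolP (a \in Av G s)) => aA; last first.
      exists (fun _ => vconst 0); split; last by [].
      by move=> s'; case: (fG s').
    case/fsaP: (Hx a aA) => [[q [g [q01 Hg Ex]]] _]; exists g; split => // _ i sT.
    rewrite Ex; case/andP: (q01 i) => _; rewrite /indic (negPf sT) => q0.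
    by rewrite -[X in _ <= X]add0r lerD2r.
  have [gf Hgf] := choice Hg.
  exists (pmass (adef s)), gf; split => //.
  + by move=> a s'; case: (Hgf a).
  + move=> pi Hpi _ i sT; case: (Hpi) => p0 pA p1.
    rewrite -[X in X <= _](wsum_const (x i) Hpi); apply: (wsum_le p0 pA) => a aA.
    by case: (Hgf a) => _ /(_ aA i sT).
Qed.

Lemma L_ach k : forall s x h0, Lseq G T k s x -> exists sg, valid_strategy G true sg /\
  forall tau, valid_strategy G false tau -> forall i, x i <= RW sg tau (T i) k h0 s.
Proof.
elim: k => [|k IH] s x h0 Hx.
  exists sdef; split; first exact: sdef_valid.
  move=> tau Ht i; rewrite Hx /vconst; by case/andP: (RW_bounds (T i) 0 h0 s (@sdef_valid true) Ht).
have [mu [gf [Hmu Hgf Hle]]] := step_decomp Hx.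
have Hfam : forall p : A * S, exists sg, valid_strategy G true sg /\
   forall tau, valid_strategy G false tau ->
     forall i, gf p.1 p.2 i <= RW sg tau (T i) k (rcons h0 (s, p.1)) p.2.
  by move=> [a s']; apply: IH; apply: Hgf.
have [F HF] := choice Hfam.
pose fam b s' := F (b, s').
exists (comb h0 s mu fam); split.
  by apply: comb_valid => // b s'; case: (HF (b, s')).
move=> tau Ht i /=; case: ifP => sT.
  by case: (Lseq_good k.+1 s) => _ _ /(_ x Hx i) /andP[].
apply: le_trans (Hle _ (valid_pi h0 s (comb_valid h0 Hmu (fun b s' => proj1 (HF (b, s')))) Ht) _ i (negbT sT)) _.
  by move=> Hm; apply: funext => a; rewrite Hm comb_root.
apply: ler_sum => a _.
case: (boolP (a \in Av G s)) => aA; last first.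
  by case: (valid_pi h0 s (comb_valid h0 Hmu (fun b s' => proj1 (HF (b, s')))) Ht) => _ /(_ a aA) -> _; rewrite !mul0r.
apply: ler_wpM2l; first by case: (valid_pi h0 s (comb_valid h0 Hmu (fun b s' => proj1 (HF (b, s')))) Ht) => /(_ a).
apply: dsum_le => // s'.
rewrite (RW_local (sg2 := fam a s')); last by move=> h' t /comb_ext ->.
by case: (HF (a, s')) => _ /(_ tau Ht i).
Qed.
Lemma SC_down (X : set vecn) z y : SC X -> X z -> (forall i, 0 <= y i <= z i) -> X y.
Proof.
move=> HX Xz yz.
pose c i := if z i == 0 then 0 else y i / z i.
suff -> : y = (fun i => c i * z i).
  apply: HX => // i; rewrite /c; case: eqP => [_|/eqP NE]; first by rewrite lexx ler01.
  case/andP: (yz i) => y0 yz'; have z0 : 0 < z i by rewrite lt_neqAle eq_sym NE (le_trans y0 yz').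
  by rewrite divr_ge0 ?(ltW z0) //= ler_pdivrMr // mul1r.
apply: funext => i; rewrite /c; case: eqP => [E|/eqP NE]; last by rewrite divfK.
by case/andP: (yz i); rewrite E mul0r => y0 y1; apply/eqP; rewrite eq_le y0 y1.
Qed.

Lemma sum_enum (I : finType) (F : I -> R) : \sum_(j : I) F j = \sum_(i < #|I|) F (enum_val i).
Proof. by rewrite -big_enum_val. Qed.

Lemma conv_fin (I : finType) (X : set vecn) (w : I -> R) (p : I -> vecn) :
  (forall j, 0 <= w j) -> \sum_j w j = 1 -> (forall j, X (p j)) ->
  conv X (fun i => \sum_j w j * p j i).
Proof.
move=> w0 w1 Xp; exists #|I|, (fun k => w (enum_val k)), (fun k => p (enum_val k)).
split => //; first by rewrite -sum_enum.
by apply: funext => i; rewrite -(@sum_enum I (fun j => w j * p j i)).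
Qed.

Lemma fsa_mem f s a (yv : S -> vecn) (zt : vecn) : (forall s', SC (f s')) ->
  (forall s', f s' (yv s')) -> (forall s' i, 0 <= yv s' i) -> a \in Av G s ->
  (forall i, 0 <= zt i <= 1) ->
  (forall i, s \notin T i -> zt i <= \sum_s' delta G s a s' * yv s' i) ->
  fsa G T f s a zt.
Proof.
move=> fSC fy y0 aA z01 zle; apply/fsaP; split => //.
pose D i := \sum_s' delta G s a s' * yv s' i.
have D0 : forall i, 0 <= D i.
  by move=> i; apply: sumr_ge0 => s' _; rewrite mulr_ge0 ?delta_ge0.
pose c i := if s \in T i then 0 else if D i == 0 then 0 else zt i / D i.
have c01 : forall i, 0 <= c i <= 1.
  move=> i; rewrite /c; case: ifP => sT; first by rewrite lexx ler01.
  case: eqP => [_|/eqP NE]; first by rewrite lexx ler01.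
  have Dp : 0 < D i by rewrite lt_neqAle eq_sym NE D0.
  case/andP: (z01 i) => z0 _.
  by rewrite divr_ge0 ?(ltW Dp) //= ler_pdivrMr // mul1r zle ?sT.
exists (fun i => if s \in T i then zt i else 0), (fun s' i => c i * yv s' i); split.
- move=> i; rewrite /indic; case: ifP => _; last by rewrite lexx.
  exact: z01.
- by move=> s'; apply: fSC.
- apply: funext => i.
  have -> : \sum_s' delta G s a s' * (c i * yv s' i) = c i * D i.
    by rewrite mulr_sumr; apply: eq_bigr => s' _; rewrite mulrCA.
  rewrite /c; case: ifP => sT; first by rewrite mul0r addr0.
  rewrite add0r; case: eqP => [E|/eqP NE]; last by rewrite divfK.
  rewrite mul0r; case/andP: (z01 i) => z0 _; apply/eqP; rewrite eq_le z0 andbT.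
  by rewrite -E /D zle ?sT.
Qed.

Lemma bellman_mem f s z (yv : A -> S -> vecn) : (forall s', Good (f s')) ->
  (forall a s', f s' (yv a s')) -> (forall a s' i, 0 <= yv a s' i <= 1) ->
  (forall i, 0 <= z i <= 1) -> (forall i, s \in T i -> z i = 1) ->
  (is_max G s -> exists2 mu, distr_on s mu &
      forall i, s \notin T i -> z i = \sum_a mu a * \sum_s' delta G s a s' * yv a s' i) ->
  (is_max G s = false -> forall a, a \in Av G s -> forall i, s \notin T i ->
      z i <= \sum_s' delta G s a s' * yv a s' i) ->
  bellman G T f s z.
Proof.
move=> fG fy y01 z01 zT Hmax Hmin.
have fSC : forall s', SC (f s') by move=> s'; case: (fG s').
have y0 : forall a s' i, 0 <= yv a s' i by move=> a s' i; case/andP: (y01 a s' i).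
rewrite /bellman; case: ifP => Hm; last first.
  move=> a aA; apply: (fsa_mem (yv := yv a)) => //.
  exact: Hmin.
case: (Hmax Hm) => mu [m0 mA m1] Hz.
pose zt a i := if s \in T i then 1 else \sum_s' delta G s a s' * yv a s' i.
have zt01 : forall a, a \in Av G s -> forall i, 0 <= zt a i <= 1.
  move=> a aA i; rewrite /zt; case: ifP => _; first by rewrite ler01 lexx.
  apply/andP; split; first by apply: sumr_ge0 => s' _; rewrite mulr_ge0 ?delta_ge0.
  rewrite -[X in _ <= X](dsum_const 1 aA); apply: dsum_le => // s'.
  by case/andP: (y01 a s' i).
pose pp a := if a \in Av G s then zt a else zt (adef s).
have -> : z = (fun i => \sum_a mu a * pp a i).
  apply: funext => i; rewrite /pp.
  have -> : \sum_a mu a * (if a \in Av G s then zt a else zt (adef s)) i =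
            \sum_a mu a * zt a i.
    apply: eq_bigr => a _; case: ifP => // /negbT /mA ->; by rewrite !mul0r.
  rewrite /zt; case: (boolP (s \in T i)) => sT; first by rewrite zT // (wsum_const 1 (And3 m0 mA m1)).
  by rewrite Hz ?sT.
apply: conv_fin => // a; rewrite /pp; case: ifP => aA.
  exists a => //; apply: (fsa_mem (yv := yv a)) => //; first exact: zt01.
  by move=> i sT; rewrite /zt (negPf sT).
exists (adef s); first exact: adefP.
apply: (fsa_mem (yv := yv (adef s))) => //; first exact: adefP.
  by apply: zt01; apply: adefP.
by move=> i sT; rewrite /zt (negPf sT).
Qed.
Definition amin s (F : A -> R) : A := Order.arg_min (adef s) (fun a => a \in Av G s) F.

Lemma aminP s F : amin s F \in Av G s /\ forall b, b \in Av G s -> F (amin s F) <= F b.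
Proof. by rewrite /amin; case: (@arg_minP _ _ _ (adef s) (fun a => a \in Av G s) F (adefP s)). Qed.

Lemma uniform_k (I : finType) (P : I -> nat -> Prop) :
  (forall i k k', (k <= k')%N -> P i k -> P i k') -> (forall i, exists k, P i k) ->
  exists k, forall i, P i k.
Proof.
move=> Pm Pe; have [kf Hk] := choice Pe.
exists (\max_i kf i)%N => i; apply: Pm (Hk i); exact: leq_bigmax.
Qed.

Section YSec.
Variable sg : strategy R S A.
Hypothesis Hsg : valid_strategy G true sg.
Variable Ti : {set S}.

Fixpoint Y (k : nat) (h : seq (S * A)) (s : S) : R :=
  if s \in Ti then 1 else
  match k with
  | 0 => 0
  | k'.+1 => if is_max G s then
               \sum_a sg h s a * \sum_s' delta G s a s' * Y k' (rcons h (s, a)) s'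
             else (fun F => F (amin s F))
                    (fun a => \sum_s' delta G s a s' * Y k' (rcons h (s, a)) s')
  end.

Lemma Y_bounds k h s : 0 <= Y k h s <= 1.
Proof.
elim: k h s => [|k IH] h s /=; case: ifP => // _; rewrite ?lexx ?ler01 //.
case: ifP => Hm.
  case: (@Hsg h s Hm) => p0 [pA p1].
  have Hp : distr_on s (sg h s) by split.
  apply/andP; split.
    rewrite -[X in X <= _](wsum_const 0 Hp); apply: (wsum_le p0 pA) => a aA.
    rewrite -[X in X <= _](dsum_const 0 aA); apply: dsum_le => // s'; by case/andP: (IH (rcons h (s, a)) s').
  rewrite -[X in _ <= X](wsum_const 1 Hp); apply: (wsum_le p0 pA) => a aA.
  rewrite -[X in _ <= X](dsum_const 1 aA); apply: dsum_le => // s'; by case/andP: (IH (rcons h (s, a)) s').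
set F := (fun a : A => \sum_s' delta G s a s' * Y k (rcons h (s, a)) s').
case: (aminP s F) => aA _.
have IH' := fun s' => IH (rcons h (s, amin s F)) s'.
apply/andP; split.
  rewrite -[X in X <= _](dsum_const 0 aA); apply: dsum_le => // s'; by case/andP: (IH' s').
rewrite -[X in _ <= X](dsum_const 1 aA); apply: dsum_le => // s'; by case/andP: (IH' s').
Qed.

Lemma Y_mono k h s : Y k h s <= Y k.+1 h s.
Proof.
elim: k h s => [|k IH] h s.
  have := Y_bounds 1 h s; rewrite /=; case: ifP => _ //; by case/andP.
rewrite [Y k.+1 h s]/= [Y k.+2 h s]/=; case: ifP => // _; case: ifP => Hm.
  case: (@Hsg h s Hm) => p0 [pA p1].
  apply: (wsum_le p0 pA) => a aA; apply: dsum_le => // s'; exact: IH.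
set F := (fun a : A => \sum_s' delta G s a s' * Y k (rcons h (s, a)) s').
set F' := (fun a : A => \sum_s' delta G s a s' * Y k.+1 (rcons h (s, a)) s').
case: (aminP s F') => aA' _; case: (aminP s F) => _ /(_ _ aA') H.
apply: le_trans H _; rewrite /F /F'; apply: dsum_le => // s'; exact: IH.
Qed.

Lemma Y_mono_le k k' h s : (k <= k')%N -> Y k h s <= Y k' h s.
Proof.
elim: k' => [|k' IH]; first by rewrite leqn0 => /eqP ->.
rewrite leq_eqVlt => /orP [/eqP -> //| /IH H]; exact: le_trans H (Y_mono _ _ _).
Qed.

Definition u h s := sup [set Y k h s | k in [set: nat]].

Lemma u_has_sup h s : has_sup [set Y k h s | k in [set: nat]].
Proof.
split; first by exists (Y 0 h s), 0%N.
by exists 1 => y [k _ <-]; case/andP: (Y_bounds k h s).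
Qed.

Lemma Y_le_u k h s : Y k h s <= u h s.
Proof. by apply: sup_upper_bound; [exact: u_has_sup | exists k]. Qed.

Lemma u_approx h s e : 0 < e -> exists k, u h s - e <= Y k h s.
Proof.
move=> e0; case: (sup_adherent e0 (u_has_sup h s)) => y [k _ <-] H.
by exists k; apply: ltW.
Qed.

Lemma u_approx_fin e (hf : A -> seq (S * A)) : 0 < e -> exists k, forall a s',
  u (hf a) s' - e <= Y k (hf a) s'.
Proof.
move=> e0.
pose P := fun (p : (A * S)%type) k => u (hf p.1) p.2 - e <= Y k (hf p.1) p.2.
have Pm : forall p k k', (k <= k')%N -> P p k -> P p k'.
  by move=> [a s'] k k' kk' H; apply: le_trans H (Y_mono_le _ _ kk').
have Pe : forall p, exists k, P p k by move=> [a s']; apply: u_approx.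
have [k Hk] := uniform_k Pm Pe.
by exists k => a s'; apply: (Hk (a, s')).
Qed.

Lemma dsum_approx s (hf : A -> seq (S * A)) e : 0 < e -> exists k, forall a, a \in Av G s ->
  \sum_s' delta G s a s' * u (hf a) s' - e <= \sum_s' delta G s a s' * Y k (hf a) s'.
Proof.
move=> e0; case: (u_approx_fin hf e0) => k Hk; exists k => a aA.
rewrite -[X in _ - X](dsum_const e aA) -sumrB.
apply: ler_sum => s' _; rewrite -mulrBr; apply: ler_wpM2l; [exact: delta_ge0 | exact: Hk].
Qed.

Lemma u_max h s : s \notin Ti -> is_max G s ->
  \sum_a sg h s a * \sum_s' delta G s a s' * u (rcons h (s, a)) s' <= u h s.
Proof.
move=> sT Hm; case: (@Hsg h s Hm) => p0 [pA p1].
have Hp : distr_on s (sg h s) by split.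
apply/ler_addgt0Pr => e e0.
case: (dsum_approx s (fun a => rcons h (s, a)) e0) => k Hk.
rewrite -lerBlDr; apply: le_trans (Y_le_u k.+1 h s).
rewrite /= (negPf sT) Hm.
rewrite -[X in _ - X](wsum_const e Hp) -sumrB.
apply: ler_sum => a _; rewrite -mulrBr.
case: (boolP (a \in Av G s)) => aA; last by rewrite pA // !mul0r.
by apply: ler_wpM2l => //; apply: Hk.
Qed.

Definition astar h s : A :=
  amin s (fun a => \sum_s' delta G s a s' * u (rcons h (s, a)) s').

Lemma u_min h s : s \notin Ti -> is_max G s = false ->
  \sum_s' delta G s (astar h s) s' * u (rcons h (s, astar h s)) s' <= u h s.
Proof.
move=> sT Hm; case: (aminP s (fun a => \sum_s' delta G s a s' * u (rcons h (s, a)) s')) => aA Hmin.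
apply/ler_addgt0Pr => e e0.
case: (dsum_approx s (fun a => rcons h (s, a)) e0) => k Hk.
rewrite -lerBlDr; apply: le_trans (Y_le_u k.+1 h s).
rewrite /= (negPf sT) Hm.
set F := (fun a : A => \sum_s' delta G s a s' * Y k (rcons h (s, a)) s').
case: (aminP s F) => bA _.
apply: le_trans (Hk _ bA); rewrite lerD2r; exact: Hmin.
Qed.

Definition tstar : strategy R S A := fun h t => pmass (astar h t).

Lemma tstar_valid : valid_strategy G false tstar.
Proof.
move=> h t _; case: (distr_pmass (proj1 (aminP t (fun a =>
  \sum_s' delta G t a s' * u (rcons h (t, a)) s')))) => H1 H2 H3; split => //.
Qed.

Lemma RW_le_u k h s : reach_within G sg tstar Ti k h s <= u h s.
Proof.
elim: k h s => [|k IH] h s /=.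
  case: ifP => sT; last by case/andP: (Y_bounds 0 h s) => H _; apply: le_trans H (Y_le_u 0 h s).
  by have := Y_le_u 0 h s; rewrite /= sT.
case: ifP => sT; first by have := Y_le_u 0 h s; rewrite /= sT.
case: (boolP (is_max G s)) => Hm /=.
  case: (@Hsg h s Hm) => p0 [pA p1].
  apply: le_trans (u_max h (negbT sT) Hm).
  apply: (wsum_le p0 pA) => a aA; apply: dsum_le => // s'; exact: IH.
rewrite /tstar sum_pmass; apply: le_trans (u_min h (negbT sT) (negbTE Hm)).
apply: dsum_le; last by move=> s'; exact: IH.
exact: (proj1 (aminP s (fun a => \sum_s' delta G s a s' * u (rcons h (s, a)) s'))).
Qed.

Lemma reach_le_u s : reach_prob G sg tstar Ti s <= u [::] s.
Proof.
apply: ge_sup; first by exists (reach_within G sg tstar Ti 0 [::] s), 0%N.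
by move=> y [k _ <-]; apply: RW_le_u.
Qed.

End YSec.
Lemma Yvec_in_L sg : valid_strategy G true sg -> forall k h s,
  Lseq G T k.+1 s (fun i => Y sg (T i) k h s).
Proof.
move=> Hsg; elim=> [|k IH] h s.
  apply: (bellman_mem (f := Lseq G T 0) (yv := fun _ _ => vconst 0)).
  - by move=> s'; apply: Lseq_good.
  - by [].
  - by move=> a s' i; rewrite /vconst lexx ler01.
  - by move=> i; apply: Y_bounds.
  - by move=> i sT /=; rewrite sT.
  - move=> _; exists (pmass (adef s)); first exact: (distr_pmass (adefP s)).
    move=> i sT /=; rewrite (negPf sT) sum_pmass big1 // => s' _; by rewrite /vconst mulr0.
  - move=> _ a aA i sT /=; rewrite (negPf sT) big1 // => s' _; by rewrite /vconst mulr0.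
apply: (bellman_mem (f := Lseq G T k.+1) (yv := fun a s' i => Y sg (T i) k (rcons h (s, a)) s')).
- by move=> s'; apply: Lseq_good.
- by move=> a s'; apply: IH.
- by move=> a s' i; apply: Y_bounds.
- by move=> i; apply: Y_bounds.
- by move=> i sT /=; rewrite sT.
- move=> Hm; exists (sg h s).
    by case: (@Hsg h s Hm) => H1 [H2 H3]; split.
  by move=> i sT /=; rewrite (negPf sT) Hm.
- move=> Hm a aA i sT /=; rewrite (negPf sT) Hm.
  by case: (aminP s (fun a => \sum_s' delta G s a s' * Y sg (T i) k (rcons h (s, a)) s')) => _ /(_ a aA).
Qed.

Lemma ach_L s x c : achievable G T s x -> 0 <= c < 1 ->
  exists k, Lseq G T k s (fun i => c * x i).
Proof.
move=> [x0 [sg [Hsg Hx]]] /andP[c0 c1].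
have xu : forall i, x i <= u sg (T i) [::] s.
  move=> i; have Hv : valid_strategy G false (tstar sg (T i)) by apply: tstar_valid.
  apply: le_trans (Hx _ Hv i) _.
  exact: reach_le_u.
pose P := fun (i : 'I_n) k => c * x i <= Y sg (T i) k [::] s.
have Pm : forall i k k', (k <= k')%N -> P i k -> P i k'.
  by move=> i k k' kk' H; apply: le_trans H (Y_mono_le Hsg (T i) [::] s kk').
have Pe : forall i, exists k, P i k.
  move=> i; have [xz|xp] := eqVneq (x i) 0.
    by exists 0%N; rewrite /P xz mulr0; case/andP: (Y_bounds Hsg (T i) 0 [::] s).
  have xpos : 0 < x i by rewrite lt_neqAle eq_sym xp x0.
  have e0 : 0 < x i - c * x i by rewrite subr_gt0 gtr_pMl.
  case: (u_approx Hsg (T i) [::] s e0) => k Hk; exists k.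
  apply: le_trans Hk; have := xu i; lra.
have [k Hk] := uniform_k Pm Pe.
exists k.+1; apply: (SC_down (z := fun i => Y sg (T i) k [::] s)).
- by case: (Lseq_good k.+1 s).
- exact: Yvec_in_L.
- by move=> i; rewrite mulr_ge0 //=; apply: Hk.
Qed.

Lemma L_in_ach k s x : Lseq G T k s x -> achievable G T s x.
Proof.
move=> Hx; split.
  by move=> i; case: (Lseq_good k s) => _ _ /(_ x Hx i) /andP[].
case: (L_ach [::] Hx) => sg [Hsg H]; exists sg; split => // tau Ht i.
apply: le_trans (H tau Ht i) _.
apply: ub_le_sup; last by exists k.
by exists 1 => y [k' _ <-]; case/andP: (RW_bounds (T i) k' [::] s Hsg Ht).
Qed.
Lemma vnorm_ge0 (x : vecn) : 0 <= vnorm x.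
Proof. exact: sqrtr_ge0. Qed.

Lemma vnorm_scale (x : vecn) c : 0 <= c -> vnorm (fun i => c * x i) = c * vnorm x.
Proof.
move=> c0; rewrite /vnorm.
have -> : \sum_(i < n) (c * x i) ^+ 2 = c ^+ 2 * \sum_(i < n) x i ^+ 2.
  by rewrite mulr_sumr; apply: eq_bigr => i _; rewrite exprMn.
by rewrite sqrtrM ?sqr_ge0 // sqrtr_sqr ger0_norm.
Qed.

Lemma vnorm_box (x : vecn) : (forall i, 0 <= x i <= 1) -> vnorm x <= Num.sqrt n%:R.
Proof.
move=> x01; apply: ler_wsqrtr.
apply: (le_trans (y := \sum_(i < n) (1 : R))); last by rewrite sumr_const card_ord.
apply: ler_sum => i _.
case/andP: (x01 i) => x0 x1; rewrite expr2.
by rewrite -[X in _ <= X]mulr1 ler_pM.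
Qed.

Definition dset (X : set vecn) (d : vecn) := [set vnorm x | x in [set x | X x /\ same_dir x d]].

Lemma dirval_ge0 (Y : set vecn) d : (forall y, Y y -> forall i, 0 <= y i <= 1) ->
  0 <= dirval Y d.
Proof.
move=> Yb; rewrite /dirval -/(dset Y d).
have [[v Hv]|E0] := pselect (exists v, dset Y d v).
  case: (Hv) => y Hy Ev; apply: le_trans (vnorm_ge0 y) _.
  apply: ub_le_sup; last by exists y.
  exists (Num.sqrt n%:R) => w [z [Yz _] <-].
  exact: vnorm_box (Yb z Yz).
suff -> : dset Y d = set0 by rewrite sup0.
by apply/seteqP; split => w // Hw; exfalso; apply: E0; exists w.
Qed.

Lemma dirval_le (X Y : set vecn) d : (forall y, Y y -> forall i, 0 <= y i <= 1) ->
  (forall x, X x -> same_dir x d -> forall e, 0 < e ->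
     exists y, [/\ Y y, same_dir y d & vnorm x - e <= vnorm y]) ->
  dirval X d <= dirval Y d.
Proof.
move=> Yb Happ; rewrite /dirval -/(dset X d) -/(dset Y d).
have [[v Hv]|E0] := pselect (exists v, dset X d v); last first.
  suff -> : dset X d = set0 by rewrite sup0; apply: dirval_ge0.
  by apply/seteqP; split => w // Hw; exfalso; apply: E0; exists w.
apply: ge_sup; first by exists v.
move=> w [x [Xx Dx] <-]; apply/ler_addgt0Pr => e e0.
case: (Happ x Xx Dx e e0) => y [Yy Dy Hy].
rewrite -lerBlDr; apply: le_trans Hy _.
apply: ub_le_sup; last by exists y.
exists (Num.sqrt n%:R) => w' [z [Yz _] <-]; exact: vnorm_box (Yb z Yz).
Qed.

Lemma ach_box s x : achievable G T s x -> forall i, 0 <= x i <= 1.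
Proof.
move=> [x0 [sg [Hsg Hx]]] i; rewrite x0 /=.
apply: le_trans (Hx sdef (@sdef_valid false) i) _.
apply: ge_sup; first by exists (reach_within G sg sdef (T i) 0 [::] s), 0%N.
by move=> y [k _ <-]; case/andP: (RW_bounds (T i) k [::] s Hsg (@sdef_valid false)).
Qed.

Lemma main_sec s d : dirval (Linf G T s) d = dirval (achievable G T s) d.
Proof.
apply/eqP; rewrite eq_le; apply/andP; split.
  apply: dirval_le; first exact: ach_box.
  move=> x [k _ Hx] Dx e e0; exists x; split => //; first exact: L_in_ach Hx.
  by rewrite lerBlDr lerDl ltW.
apply: dirval_le.
  by move=> y [k _ Hy]; case: (Lseq_good k s) => _ _ /(_ y Hy).
move=> x Ax [l l0 Ex] e e0.
set V := vnorm x.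
have V0 : 0 <= V := vnorm_ge0 x.
pose c := (V + e / 2) / (V + e).
have Ve : 0 < V + e by rewrite ltr_wpDl.
have Ve2 : 0 < V + e / 2 by rewrite ltr_wpDl // divr_gt0.
have cE : c * (V + e) = V + e / 2 by rewrite /c divfK // gt_eqF.
have c0 : 0 < c by rewrite /c divr_gt0.
have c1 : c < 1 by rewrite /c ltr_pdivrMr // mul1r ltrD2l ltr_pdivrMr // ltr_pMr // ltr1n.
case: (ach_L Ax (c := c)); first by rewrite (ltW c0) c1.
move=> k Hk; exists (fun i => c * x i); split.
- by exists k.
- exists (c * l); first exact: mulr_gt0.
  by apply: funext => i; rewrite Ex mulrA.
- rewrite vnorm_scale ?(ltW c0) // -/V.
  have ce : c * e <= e by rewrite ler_piMl ?ltW.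
  have : c * V = V + e / 2 - c * e by rewrite -cE mulrDr addrK.
  have : 0 < e / 2 by rewrite divr_gt0.
  lra.
Qed.
End Game.

Unset Implicit Arguments.

Theorem proposition5p2 (R : realType) (S A : finType) (G : game R S A)
  (n : nat) (T : 'I_n -> {set S}) :
  wf_game G ->
  forall (s : S) (d : vec R n), in_D d ->
    dirval (Linf G T s) d = dirval (achievable G T s) d.
Proof.
move=> wf s d _; exact: main_sec.
Qed.
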